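(* Let $F$ be an algebraically closed field, $R$ an $F$-algebra, $\sigma$ an $F$-algebra automorphism of $R$, $\delta$ a $\sigma$-derivation of $R$, and $T=R[x;\sigma,\delta]$. Let $\mathfrak m$ be an ideal of $R$ with $R/\mathfrak m\cong F$, and suppose that $\sigma(\mathfrak m)\neq\mathfrak m$ and $\delta(\mathfrak m\cap\sigma^{-1}(\mathfrak m))\subseteq\mathfrak m$. Then there is a unique ideal $M$ of $T$ such that $M\cap R=\mathfrak m$. Moreover, $T/M\cong F$.
   Context: A $\sigma$-derivation is an $F$-linear map $\delta$ with $\delta(ab)=\delta(a)b+\sigma(a)\delta(b)$; $R[x;\sigma,\delta]$ is the algebra generated by $R$ and $x$ with $xr-\sigma(r)x=\delta(r)$ for $r\in R$. *)

(* Defs.v *)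
From HB Require Import structures.
From mathcomp Require Import all_boot all_order all_algebra.
Set Implicit Arguments. Unset Strict Implicit. Unset Printing Implicit Defensive.
Import GRing.Theory.
Local Open Scope ring_scope.

Definition is_ideal (A : pzRingType) (I : A -> Prop) : Prop :=
  [/\ I 0,
      (forall a b, I a -> I b -> I (a + b)),
      (forall a b, I b -> I (a * b)) &
      (forall a b, I a -> I (a * b))].

Definition is_alg_hom (F : fieldType) (A B : lalgType F) (f : A -> B) : Prop :=
  [/\ (forall a b, f (a + b) = f a + f b),
      (forall k a, f (k *: a) = k *: f a),
      (forall a b, f (a * b) = f a * f b) &
      f 1 = 1].

Definition is_alg_aut (F : fieldType) (A : lalgType F) (s : A -> A) : Prop :=
  is_alg_hom s /\ bijective s.

Definition is_sigma_derivation (F : fieldType) (A : lalgType F)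
    (s d : A -> A) : Prop :=
  [/\ (forall a b, d (a + b) = d a + d b),
      (forall k a, d (k *: a) = k *: d a) &
      (forall a b, d (a * b) = d a * b + s a * d b)].

(* A / I is isomorphic to F as an F-algebra: there is a surjective F-algebra
   homomorphism A -> F with kernel exactly I. *)
Definition quotient_iso_F (F : fieldType) (A : lalgType F) (I : A -> Prop) : Prop :=
  exists phi : A -> F,
    [/\ (forall a b, phi (a + b) = phi a + phi b),
        (forall k a, phi (k *: a) = k * phi a),
        (forall a b, phi (a * b) = phi a * phi b),
        phi 1 = 1 &
        ((forall k, exists a, phi a = k) /\
         (forall a, I a <-> phi a = 0))].

(* T, together with the embedding iota : R -> T and the element x, is the Ore
   extension R[x; s, d]: iota is an injective F-algebra map, x iota(r) -
   iota(s r) x = iota(d r), and T is a free left R-module on 1, x, x^2, ... *)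
Definition is_ore_extension (F : fieldType) (R T : lalgType F)
    (s d : R -> R) (iota : R -> T) (x : T) : Prop :=
  [/\ is_alg_hom iota,
      injective iota,
      (forall r, x * iota r - iota (s r) * x = iota (d r)),
      (forall t : T, exists c : seq R,
          t = \sum_(i < size c) iota c`_i * x ^+ i) &
      (forall c : seq R, \sum_(i < size c) iota c`_i * x ^+ i = 0 ->
          forall i, c`_i = 0)].

(* Main.v *)
Require Import Defs.
From HB Require Import structures.
From mathcomp Require Import all_boot all_order all_algebra all_field.
From mathcomp Require Import ring.
From Stdlib Require Import ClassicalEpsilon Classical.
Import GRing.Theory.
Local Open Scope ring_scope.

Lemma zid (F : fieldType) (V: lmodType F) (A B X O : V) (pb ps l : F) :
  (ps - pb) *: (X - l *: O) = A - pb *: X - (B - ps *: X) - (A - B - (l * (pb - ps)) *: O).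
Proof.
rewrite !scalerBl !scalerBr !scalerA !mulrBr (mulrC l ps) (mulrC l pb).
set a := (ps * l) *: O; set c := (pb * l) *: O.
set u := ps *: X; set v := pb *: X.
rewrite !opprB ?opprD ?opprK.
rewrite scalerBl -/c -/a [c - a + _]addrC addrA -(addrA (A - v)).
rewrite (addrA (u - B)) (addrA (u - B)) subrK.
rewrite addrCA addrA (addrA (u - A)) subrK.
by rewrite [RHS]addrA [RHS]addrAC [LHS]addrAC (addrAC u).
Qed.

Section Psi.
Variables (F : fieldType) (R T : algType F) (sigma delta : R -> R) (iota : R -> T) (x : T)
  (phi : R -> F) (lam : F).
Hypothesis iotaD : forall a b, iota (a + b) = iota a + iota b.
Hypothesis iotaZ : forall k a, iota (k *: a) = k *: iota a.
Hypothesis iotaM : forall a b, iota (a * b) = iota a * iota b.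
Hypothesis iota1 : iota 1 = 1.
Hypothesis comm : forall r, x * iota r - iota (sigma r) * x = iota (delta r).
Hypothesis span : forall t : T, exists c : seq R, t = \sum_(i < size c) iota c`_i * x ^+ i.
Hypothesis free : forall c : seq R, \sum_(i < size c) iota c`_i * x ^+ i = 0 -> forall i, c`_i = 0.
Hypothesis phiD : forall a b, phi (a + b) = phi a + phi b.
Hypothesis phiZ : forall k a, phi (k *: a) = k * phi a.
Hypothesis phiM : forall a b, phi (a * b) = phi a * phi b.
Hypothesis phi1 : phi 1 = 1.
Hypothesis key : forall r, phi (delta r) = lam * (phi r - phi (sigma r)).

Definition rep (f : nat -> R) n : T := \sum_(i < n) iota (f i) * x ^+ i.
Definition val (f : nat -> R) n : F := \sum_(i < n) phi (f i) * lam ^+ i.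

Lemma iota0 : iota 0 = 0.
Proof. have -> : (0:R) = (0:F) *: (0:R) by rewrite scale0r. by rewrite iotaZ scale0r. Qed.
Lemma phi0 : phi 0 = 0.
Proof. have -> : (0:R) = (0:F) *: (0:R) by rewrite scale0r. by rewrite phiZ mul0r. Qed.
Lemma iotaB a b : iota (a - b) = iota a - iota b.
Proof. have -> : -b = (-1 : F) *: b by rewrite scaleN1r. by rewrite iotaD iotaZ scaleN1r. Qed.
Lemma phiB a b : phi (a - b) = phi a - phi b.
Proof. have -> : -b = (-1 : F) *: b by rewrite scaleN1r. by rewrite phiD phiZ mulN1r. Qed.

Lemma sum_widen (V : nmodType) (G : nat -> V) n N : (n <= N)%N ->
  \sum_(i < n) G i = \sum_(i < N) (if (i < n)%N then G i else 0).
Proof. move=> le; by rewrite (big_ord_widen _ _ le) big_mkcond. Qed.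

Lemma rep_widen f n N : (n <= N)%N ->
  rep f n = rep (fun i => if (i < n)%N then f i else 0) N.
Proof.
move=> le; rewrite /rep (@sum_widen _ (fun i => iota (f i) * x ^+ i) _ _ le); apply: eq_bigr => i _.
by case: ifP => _ //; rewrite iota0 mul0r.
Qed.
Lemma val_widen f n N : (n <= N)%N ->
  val f n = val (fun i => if (i < n)%N then f i else 0) N.
Proof.
move=> le; rewrite /val (@sum_widen _ (fun i => phi (f i) * lam ^+ i) _ _ le); apply: eq_bigr => i _.
by case: ifP => _ //; rewrite phi0 mul0r.
Qed.
Lemma rep_add f g N : rep f N + rep g N = rep (fun i => f i + g i) N.
Proof. rewrite /rep -big_split; apply: eq_bigr => i _; by rewrite iotaD mulrDl. Qed.
Lemma val_add f g N : val f N + val g N = val (fun i => f i + g i) N.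
Proof. rewrite /val -big_split; apply: eq_bigr => i _; by rewrite phiD mulrDl. Qed.

Lemma rep_uniq f n g k : rep f n = rep g k -> val f n = val g k.
Proof.
move=> E.
have ln : (n <= n + k)%N by rewrite leq_addr.
have lk : (k <= n + k)%N by rewrite leq_addl.
rewrite (rep_widen f n _ ln) (rep_widen g k _ lk) in E.
rewrite (val_widen f n _ ln) (val_widen g k _ lk).
apply: eq_bigr => i _.
set c := mkseq (fun j => (if (j < n)%N then f j else 0) - (if (j < k)%N then g j else 0)) (n + k).
have Z : \sum_(j < size c) iota c`_j * x ^+ j = 0.
  rewrite size_mkseq.
  transitivity (rep (fun i => if (i < n)%N then f i else 0) (n + k)
     - rep (fun i => if (i < k)%N then g i else 0) (n + k)); last by rewrite E subrr.
  rewrite /rep -sumrB; apply: eq_bigr => j _.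
  by rewrite nth_mkseq // iotaB mulrBl.
have := free _ Z i; rewrite nth_mkseq // => /eqP; rewrite subr_eq0 => /eqP ->.
by [].
Qed.

Definition coefs (t : T) : seq R :=
  proj1_sig (constructive_indefinite_description _ (span t)).
Lemma coefsP t : t = rep (nth 0 (coefs t)) (size (coefs t)).
Proof. rewrite /coefs; by case: constructive_indefinite_description. Qed.
Definition psi t := val (nth 0 (coefs t)) (size (coefs t)).
Lemma psi_rep f n : psi (rep f n) = val f n.
Proof. by rewrite /psi; apply: rep_uniq; rewrite -coefsP. Qed.
Lemma repP t : exists f n, t = rep f n.
Proof. by exists (nth 0 (coefs t)), (size (coefs t)); apply: coefsP. Qed.

Lemma psi0 : psi 0 = 0.
Proof.
have -> : (0:T) = rep (fun _ => 0) 0 by rewrite /rep big_ord0.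
by rewrite psi_rep /val big_ord0.
Qed.

Lemma psiD t u : psi (t + u) = psi t + psi u.
Proof.
case: (repP t) => f [n ->]; case: (repP u) => g [k ->].
transitivity (val f n + val g k); last by rewrite !psi_rep.
have ln : (n <= n + k)%N by rewrite leq_addr.
have lk : (k <= n + k)%N by rewrite leq_addl.
by rewrite (rep_widen f n _ ln) (rep_widen g k _ lk) rep_add psi_rep (val_widen f n _ ln)
  (val_widen g k _ lk) val_add.
Qed.

Lemma psiZ k t : psi (k *: t) = k * psi t.
Proof.
case: (repP t) => f [n ->].
have -> : k *: rep f n = rep (fun i => k *: f i) n.
  rewrite /rep scaler_sumr; apply: eq_bigr => i _; by rewrite iotaZ scalerAl.
rewrite !psi_rep /val mulr_sumr; apply: eq_bigr => i _; by rewrite phiZ mulrA.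
Qed.

Lemma psi_sum n (G : nat -> T) : psi (\sum_(i < n) G i) = \sum_(i < n) psi (G i).
Proof.
elim: n => [|n IH]; first by rewrite !big_ord0 psi0.
by rewrite !big_ord_recr /= psiD IH.
Qed.

Lemma psi_mulx t : psi (t * x) = psi t * lam.
Proof.
case: (repP t) => f [n ->].
have -> : rep f n * x = rep (fun i => if i is j.+1 then f j else 0) n.+1.
  rewrite /rep big_ord_recl /= iota0 mul0r add0r mulr_suml.
  apply: eq_bigr => i _; by rewrite exprSr mulrA.
rewrite !psi_rep /val big_ord_recl /= phi0 mul0r add0r mulr_suml.
apply: eq_bigr => i _; by rewrite exprSr mulrA.
Qed.

Lemma psi_single c i : psi (iota c * x ^+ i) = phi c * lam ^+ i.
Proof.
have -> : iota c * x ^+ i = rep (fun j => if j == i then c else 0) i.+1.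
  rewrite /rep big_ord_recr /= eqxx big1 ?add0r // => j _.
  by rewrite (ltn_eqF (ltn_ord j)) iota0 mul0r.
rewrite psi_rep /val big_ord_recr /= eqxx big1 ?add0r // => j _.
by rewrite (ltn_eqF (ltn_ord j)) phi0 mul0r.
Qed.

Lemma psi_iota r : psi (iota r) = phi r.
Proof.
have := psi_single r 0; by rewrite !expr0 !mulr1.
Qed.

Lemma psiB c i r : psi (iota c * x ^+ i * iota r) = phi c * lam ^+ i * phi r.
Proof.
elim: i r => [|i IH] r.
  by rewrite !expr0 !mulr1 -iotaM psi_iota phiM.
have E : iota c * x ^+ i.+1 * iota r =
    iota c * x ^+ i * iota (sigma r) * x + iota c * x ^+ i * iota (delta r).
  rewrite exprSr -!mulrA -!mulrDr; congr (_ * (_ * _)).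
  by rewrite -comm addrC subrK.
rewrite E psiD psi_mulx !IH key exprSr; ring.
Qed.

Lemma psi_mulr t r : psi (t * iota r) = psi t * phi r.
Proof.
case: (repP t) => f [n ->].
rewrite /rep mulr_suml (psi_sum _ (fun i => iota (f i) * x ^+ i * iota r)).
rewrite -/(rep f n) psi_rep /val mulr_suml; apply: eq_bigr => i _.
by rewrite psiB.
Qed.

Lemma psi_mulxn t i : psi (t * x ^+ i) = psi t * lam ^+ i.
Proof.
elim: i => [|i IH]; first by rewrite !expr0 !mulr1.
by rewrite !exprSr mulrA psi_mulx IH mulrA.
Qed.

Lemma psiM t u : psi (t * u) = psi t * psi u.
Proof.
case: (repP u) => g [k ->].
rewrite /rep mulr_sumr (psi_sum _ (fun i => t * (iota (g i) * x ^+ i))).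
rewrite -/(rep g k) psi_rep /val mulr_sumr; apply: eq_bigr => i _.
by rewrite mulrA psi_mulxn psi_mulr mulrA.
Qed.


Variable b : R.
Hypothesis hb : phi b != phi (sigma b).

Lemma uniq_part (M' : T -> Prop) : is_ideal M' ->
  (forall r, M' (iota r) <-> phi r = 0) -> forall t, M' t <-> psi t = 0.
Proof.
move=> [I0 ID IL IR] MR.
have IN y : M' y -> M' (- y) by move=> h; rewrite -mulN1r; apply: (IL).
have IB y z : M' y -> M' z -> M' (y - z) by move=> ? ?; apply: (ID) => //; apply: (IN).
have IZ k y : M' y -> M' (k *: y) by move=> h; rewrite -[y]mul1r scalerAl; apply: (IL).
have cent r : M' (iota r - phi r *: 1).
  have -> : iota r - phi r *: 1 = iota (r - phi r *: 1) by rewrite iotaB iotaZ iota1.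
  by apply/MR; rewrite phiB phiZ phi1 mulr1 subrr.
have Ix : M' (x - lam *: 1).
  set mu := phi (sigma b) - phi b.
  have mu0 : mu != 0 by rewrite subr_eq0 eq_sym.
  have Y : M' (mu *: (x - lam *: 1)).
    have -> : mu *: (x - lam *: 1) = x * (iota b - phi b *: 1)
       - (iota (sigma b) - phi (sigma b) *: 1) * x - (iota (delta b) - phi (delta b) *: 1).
      rewrite mulrBr mulrBl -scalerAr -scalerAl mulr1 mul1r -(comm b) key.
      exact: zid.
    apply: (IB); [apply: (IB)|]; [apply: (IL); exact: cent | apply: (IR); exact: cent | exact: cent].
  have -> : x - lam *: 1 = mu^-1 *: (mu *: (x - lam *: 1)) by rewrite scalerA mulVf // scale1r.
  exact: (IZ).
have Ixn i : M' (x ^+ i - lam ^+ i *: 1).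
  elim: i => [|i IH]; first by rewrite !expr0 scale1r subrr.
  have -> : x ^+ i.+1 - lam ^+ i.+1 *: 1 =
     (x ^+ i - lam ^+ i *: 1) * x + (lam ^+ i *: 1) * (x - lam *: 1).
    by rewrite mulrBl mulrBr -!scalerAl !mul1r scalerA !exprSr addrA subrK.
  by apply: (ID); [apply: (IR) | apply: (IL)].
have It t : M' (t - psi t *: 1).
  case: (repP t) => f [n ->]; rewrite psi_rep /rep /val scaler_suml -sumrB.
  apply: (big_ind M') => //.
  move=> i _.
  have -> : iota (f i) * x ^+ i - (phi (f i) * lam ^+ i) *: 1 =
     iota (f i) * (x ^+ i - lam ^+ i *: 1) + (iota (f i) - phi (f i) *: 1) * (lam ^+ i *: 1).
    by rewrite mulrBr mulrBl -scalerAr mulr1 -scalerAl mul1r scalerA addrA subrK.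
  by apply: (ID); [apply: (IL); exact: Ixn | apply: (IR); exact: cent].
move=> t; split => [Mt | P0].
  case: (eqVneq (psi t) 0) => // nz; exfalso.
  have I1 : M' (psi t *: 1).
    by have := IB _ _ Mt (It t); rewrite opprB addrC subrK.
  have H1 : M' 1.
    have -> : (1:T) = (psi t)^-1 *: (psi t *: 1) by rewrite scalerA mulVf // scale1r.
    exact: (IZ).
  have := proj1 (MR 1); rewrite iota1 => /(_ H1); rewrite phi1 => /eqP.
  by rewrite oner_eq0.
have := It t; by rewrite P0 scale0r subr0.
Qed.

Lemma main_sec : exists M : T -> Prop,
  [/\ is_ideal M, (forall r, M (iota r) <-> phi r = 0),
      (forall M' : T -> Prop, is_ideal M' ->
          (forall r, M' (iota r) <-> phi r = 0) -> forall t, M' t <-> M t) &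
      quotient_iso_F M].
Proof.
exists (fun t => psi t = 0); split.
- split => [|a c Ha Hc|a c Hc|a c Ha]; first exact: psi0.
  + by rewrite psiD Ha Hc addr0.
  + by rewrite psiM Hc mulr0.
  + by rewrite psiM Ha mul0r.
- by move=> r; rewrite psi_iota.
- move=> M' IM MR t; exact: uniq_part IM MR t.
- exists psi; split.
  + exact: psiD.
  + exact: psiZ.
  + exact: psiM.
  + by rewrite -iota1 psi_iota phi1.
  + split => // k; exists (k *: 1); by rewrite psiZ -iota1 psi_iota phi1 mulr1.
Qed.

End Psi.


Theorem proposition4p3 (F : closedFieldType) (R T : algType F)
  (sigma delta : R -> R) (iota : R -> T) (x : T) (m : R -> Prop) :
  is_alg_aut sigma ->
  is_sigma_derivation sigma delta ->
  is_ore_extension sigma delta iota x ->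
  is_ideal m ->
  quotient_iso_F m ->
  ~ (forall y, (exists r, m r /\ y = sigma r) <-> m y) ->
  (forall r, m r -> m (sigma r) -> m (delta r)) ->
  exists M : T -> Prop,
    [/\ is_ideal M,
        (forall r, M (iota r) <-> m r),
        (forall M' : T -> Prop, is_ideal M' ->
            (forall r, M' (iota r) <-> m r) -> forall t, M' t <-> M t) &
        quotient_iso_F M].
Proof.
move=> [[sD sZ sM s1] [g sK1 sK2]] [dD dZ dM] [[iD iZ iM i1] _ comm span free] _
  [phi [phD phZ phM ph1 [phS phK]]] neq hd.
have phiB a c : phi (a - c) = phi a - phi c.
  have -> : -c = (-1 : F) *: c by rewrite scaleN1r.
  by rewrite phD phZ mulN1r.
have sB a c : sigma (a - c) = sigma a - sigma c.
  have -> : -c = (-1 : F) *: c by rewrite scaleN1r.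
  by rewrite sD sZ scaleN1r.
have dB a c : delta (a - c) = delta a - delta c.
  have -> : -c = (-1 : F) *: c by rewrite scaleN1r.
  by rewrite dD dZ scaleN1r.
have [b hb] : exists b, phi b != phi (sigma b).
  apply: NNPP => H.
  have E c : phi c = phi (sigma c).
    case: (eqVneq (phi c) (phi (sigma c))) => // nb; exfalso; apply: H; by exists c.
  apply: neq => y; split.
  - move=> [r [mr ->]]; apply/phK; rewrite -E; exact/phK.
  - move=> my; exists (g y); split; last by rewrite sK2.
    apply/phK; rewrite E sK2; exact/phK.
have ident a : phi (delta a) * (phi b - phi (sigma b)) =
    phi (delta b) * (phi a - phi (sigma a)).
  have m1 : m (a * b - b * a) by apply/phK; rewrite phiB !phM mulrC subrr.
  have m2 : m (sigma (a * b - b * a)) by apply/phK; rewrite sB !sM phiB !phM mulrC subrr.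
  have := hd _ m1 m2; move/phK; rewrite dB !dM phiB !phD !phM => /eqP.
  rewrite subr_eq0 => /eqP H.
  apply/eqP; rewrite -subr_eq0; apply/eqP.
  transitivity ((phi (delta a) * phi b + phi (sigma a) * phi (delta b)) -
     (phi (delta b) * phi a + phi (sigma b) * phi (delta a))); first ring.
  by rewrite H subrr.
pose lam := phi (delta b) / (phi b - phi (sigma b)).
have key r : phi (delta r) = lam * (phi r - phi (sigma r)).
  have d0 : phi b - phi (sigma b) != 0 by rewrite subr_eq0.
  by rewrite /lam mulrAC -ident mulfK.
have [M [H1 H2 H3 H4]] := @main_sec _ _ _ sigma delta iota x phi lam iD iZ iM i1 comm span free phD phZ phM ph1 key b hb.
exists M; split => //.
- by move=> r; split => [/H2/phK | /phK/H2].
- move=> M' IM MR t; apply: H3 => // r; split => [/MR/phK | /phK/MR] //.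
Qed.
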